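(* If $r$ divides $s$, then $\nu(n,P^{(r)}_s)\ge\left(\left(\frac{r}{s}\right)^r+o(1)\right)\binom{n}{r}$, where $o(1)\to0$ as $n\to\infty$ with $r,s$ fixed.
   Context: $K^{(r)}_n$ is the ordered complete $r$-uniform hypergraph on $[n]=\{1,\dots,n\}$ with its natural order; a copy of an ordered hypergraph $H$ in $K^{(r)}_n$ is the image of $H$ under an order-preserving injection $V(H)\to[n]$. The natural path $P^{(r)}_s$ has vertices $v_1<\dots<v_s$ and edges all sets of $r$ consecutive vertices $\{v_j,\dots,v_{j+r-1}\}$, $1\le j\le s-r+1$. $\nu(n,H)$ is the maximum number of pairwise edge-disjoint copies of $H$ in $K^{(r)}_n$. *)

(* Defs.v *)
From mathcomp Require Import all_boot all_order all_algebra.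
Set Implicit Arguments. Unset Strict Implicit. Unset Printing Implicit Defensive.

(* An ordered hypergraph on vertex set 'I_k (with the natural order) is given
   by its edge set E : {set {set 'I_k}}. *)

Definition order_preserving (k n : nat) (f : 'I_k -> 'I_n) : bool :=
  [forall i : 'I_k, forall j : 'I_k, (i < j) ==> (f i < f j)].

Definition img_edges (k n : nat) (f : 'I_k -> 'I_n) (E : {set {set 'I_k}})
  : {set {set 'I_n}} := [set f @: (e : {set 'I_k}) | e in E].

Definition is_copy (k n : nat) (E : {set {set 'I_k}}) (C : {set {set 'I_n}})
  : bool := [exists f : {ffun 'I_k -> 'I_n}, order_preserving f && (C == img_edges f E)].

Definition is_packing (k n : nat) (E : {set {set 'I_k}})
  (P : {set {set {set 'I_n}}}) : bool :=
  [forall C in P, is_copy E C] && trivIset P.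

Definition nu (k n : nat) (E : {set {set 'I_k}}) : nat :=
  \max_(P : {set {set {set 'I_n}}} | is_packing E P) #|P|.

Definition natural_path (r s : nat) : {set {set 'I_s}} :=
  [set [set i : 'I_s | (j <= i) && (i < j + r)] | j : 'I_s & j + r <= s].

(* Main.v *)
Require Import Defs.
From mathcomp Require Import all_boot all_order all_algebra zify.
Import GRing.Theory Num.Theory.
Set Implicit Arguments. Unset Strict Implicit. Unset Printing Implicit Defensive.

Lemma expn_mono a b e : a <= b -> a ^ e <= b ^ e.
Proof. by move=> h; case: e => // e; rewrite leq_exp2r. Qed.

Lemma ffact_ub n k : n ^_ k <= n ^ k.
Proof.
elim: k => [|k IH]; first by rewrite ffactn0 expn0.
rewrite ffactnSr expnSr; apply: leq_mul => //; exact: leq_subr.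
Qed.

Lemma ffact_lb n k : (n - k) ^ k <= n ^_ k.
Proof.
elim: k => [|k IH]; first by rewrite ffactn0 expn0.
rewrite ffactnSr expnSr; apply: leq_mul; last lia.
apply: leq_trans IH; apply: expn_mono; lia.
Qed.

Definition sseq q (A : {set 'I_q}) : seq nat := sort leq [seq val x | x <- enum A].
Definition av q (A : {set 'I_q}) i := nth 0 (sseq A) i.

Lemma sseq_mem q (A : {set 'I_q}) (x : 'I_q) : (val x \in sseq A) = (x \in A).
Proof. by rewrite mem_sort (mem_map val_inj) mem_enum. Qed.

Lemma sseq_size q (A : {set 'I_q}) : size (sseq A) = #|A|.
Proof. by rewrite size_sort size_map cardE. Qed.

Lemma sseq_lt q (A : {set 'I_q}) y : y \in sseq A -> y < q.
Proof. rewrite /sseq mem_sort => /mapP [x _ ->]; exact: ltn_ord. Qed.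

Lemma sseq_sorted q (A : {set 'I_q}) : sorted ltn (sseq A).
Proof.
rewrite ltn_sorted_uniq_leq sort_uniq sort_sorted ?andbT; last exact: leq_total.
by rewrite (map_inj_uniq val_inj) enum_uniq.
Qed.

Lemma av_lt q (A : {set 'I_q}) i : 0 < q -> av A i < q.
Proof.
move=> q0; rewrite /av; case: (ltnP i (size (sseq A))) => h.
  by apply: sseq_lt; apply: mem_nth.
by rewrite nth_default.
Qed.

Lemma av_inc q (A : {set 'I_q}) i j : j < #|A| -> i < j -> av A i < av A j.
Proof.
move=> hj hij; rewrite /av.
apply: (sorted_ltn_nth ltn_trans) => //; first exact: sseq_sorted.
  by rewrite inE sseq_size; lia.
by rewrite inE sseq_size.
Qed.

Lemma av_mem q (A : {set 'I_q}) (x : 'I_q) :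
  (x \in A) = [exists t : 'I_#|A|, av A t == val x].
Proof.
apply/idP/existsP.
  rewrite -sseq_mem => hx.
  have hi : index (val x) (sseq A) < #|A| by rewrite -sseq_size index_mem.
  exists (Ordinal hi); by rewrite /av /= nth_index.
move=> [t /eqP ht]; rewrite -sseq_mem -ht /av mem_nth // sseq_size.
exact: ltn_ord.
Qed.

Definition fA r q n s (A : {set 'I_q}) : {ffun 'I_s -> 'I_n.+1} :=
  [ffun k : 'I_s => inord (av A (k %% r) + (k %/ r) * q)].
Arguments fA r {q} n {s} A.

Lemma nat_aux a b t u q : a < q -> t < u -> a + t * q < b + u * q.
Proof.
move=> ha htu; have : t.+1 * q <= u * q by rewrite leq_mul2r htu orbT.
rewrite mulSn; lia.
Qed.

Lemma fA_val r q n s (A : {set 'I_q}) (k : 'I_s) :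
  0 < r -> r %| s -> 0 < q -> s %/ r * q <= n.+1 ->
  val (fA r n A k) = av A (k %% r) + (k %/ r) * q.
Proof.
move=> hr hrs hq hb; rewrite ffunE /= inordK //.
have hk : k %/ r < s %/ r by rewrite ltn_divLR // divnK.
apply: leq_trans hb; have := nat_aux 0 (av_lt A (k %% r) hq) hk; lia.
Qed.

Lemma fA_op r q n s (A : {set 'I_q}) :
  0 < r -> r %| s -> 0 < q -> s %/ r * q <= n.+1 -> #|A| = r ->
  order_preserving (fA r n A : 'I_s -> 'I_n.+1).
Proof.
move=> hr hrs hq hb hA; apply/forallP => i; apply/forallP => j; apply/implyP => hij.
rewrite -[_ < _]/(val _ < val _) !fA_val //.
have ei := divn_eq i r; have ej := divn_eq j r.
have hir := ltn_pmod i hr; have hjr := ltn_pmod j hr.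
case: (ltngtP (i %/ r) (j %/ r)) => h.
- exact: nat_aux (av_lt _ _ hq) h.
- have : j %/ r * r + r <= i %/ r * r by rewrite addnC -mulSn leq_mul2r h orbT.
  lia.
- rewrite h ltn_add2r; apply: av_inc; first by rewrite hA.
  rewrite h in ei; lia.
Qed.

Definition modset q n (E : {set 'I_n}) : {set 'I_q} :=
  [set x : 'I_q | [exists y in E, val y %% q == val x]].

Lemma av_mem' q r (A : {set 'I_q}) (x : 'I_q) : #|A| = r ->
  (x \in A) = [exists t : 'I_r, av A t == val x].
Proof.
move=> hA; rewrite av_mem; apply/existsP/existsP => [[t ht]|[t ht]].
  by exists (cast_ord hA t).
by exists (cast_ord (esym hA) t).
Qed.

Lemma window_exists j r t : 0 < r -> t < r ->
  exists i, [/\ j <= i, i < j + r & i %% r = t].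
Proof.
move=> hr ht; have ej := divn_eq j r; have hjr := ltn_pmod j hr.
case: (leqP (j %% r) t) => h.
  exists (j %/ r * r + t); split; try lia.
  by rewrite modnMDl modn_small.
exists ((j %/ r).+1 * r + t); split; rewrite ?mulSn; try lia.
by rewrite -mulSn modnMDl modn_small.
Qed.

Lemma modset_edge r q n s (A : {set 'I_q}) E :
  0 < r -> r %| s -> 0 < q -> s %/ r * q <= n.+1 -> #|A| = r ->
  E \in img_edges (fA r n A : 'I_s -> 'I_n.+1) (natural_path r s) ->
  modset q E = A.
Proof.
move=> hr hrs hq hb hA /imsetP [e He ->].
case/imsetP: He => j; rewrite inE => hj ->.
apply/setP => x; rewrite inE (av_mem' x hA).
apply/existsP/existsP.
  move=> [y /andP [/imsetP [i hi ->] /eqP hyx]].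
  exists (Ordinal (ltn_pmod i hr)) => /=.
  move: hyx; rewrite fA_val // addnC modnMDl modn_small ?av_lt // => ->.
  by [].
move=> [t /eqP ht].
have [i [h1 h2 h3]] := window_exists j hr (ltn_ord t).
have his : i < s by lia.
exists (fA r n A (Ordinal his)); apply/andP; split.
  apply/imsetP; exists (Ordinal his) => //; rewrite inE /=; apply/andP; split; lia.
by rewrite fA_val //= addnC modnMDl modn_small ?av_lt //= h3 ht.
Qed.

Lemma main_comb r s n : 0 < r -> 0 < s -> r %| s ->
  'C(n %/ (s %/ r), r) <= nu n (natural_path r s).
Proof.
move=> hr hs hrs; case: n => [|n]; first by rewrite div0n bin0n eqn0Ngt hr.
set m := s %/ r; set q := n.+1 %/ m.
have [hq|hq] := posnP q; first by rewrite hq bin0n eqn0Ngt hr.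
have hb : s %/ r * q <= n.+1 by rewrite mulnC leq_trunc_div.
pose D := [set A : {set 'I_q} | #|A| == r].
pose C := fun A : {set 'I_q} =>
  img_edges (fA r n A : 'I_s -> 'I_n.+1) (natural_path r s).
pose P := [set C A | A in D].
have HC : forall A, A \in D -> forall E, E \in C A -> modset q E = A.
  move=> A; rewrite inE => /eqP hA E hE.
  exact: (modset_edge hr hrs hq hb hA hE).
have hrs' : r <= s by apply: dvdn_leq.
have e0 : [set i : 'I_s | (Ordinal hs <= i) && (i < Ordinal hs + r)]
   \in natural_path r s.
  by apply/imsetP; exists (Ordinal hs); rewrite // inE /=.
have Hne : forall A, exists E, E \in C A.
  move=> A; eexists; apply/imsetP; exists [set i : 'I_s | (Ordinal hs <= i) && (i < Ordinal hs + r)]; first exact: e0.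
  reflexivity.
have Hinj : {in D &, injective C}.
  move=> A B hA hB hAB; have [E hE] := Hne A.
  have hE' : E \in C B by rewrite -hAB.
  by rewrite -(HC A hA E hE) (HC B hB E hE').
have hP : is_packing (natural_path r s) P.
  apply/andP; split.
    apply/forallP => X; apply/implyP => /imsetP [A hA ->].
    apply/existsP; exists (fA r n A : {ffun 'I_s -> 'I_n.+1}).
    have hA' : #|A| = r by move: hA; rewrite inE => /eqP.
    by rewrite fA_op //=.
  apply/trivIsetP => X Y /imsetP [A hA ->] /imsetP [B hB ->] hne.
  rewrite -setI_eq0; apply/eqP/setP => E; rewrite !inE.
  apply/negP => /andP [h1 h2]; move/eqP: hne; apply.
  by rewrite -(HC A hA E h1) (HC B hB E h2).
have -> : 'C(q, r) = #|P|.
  by rewrite card_in_imset // card_draws card_ord.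
rewrite /nu; exact: (@leq_bigmax_cond _ (fun P => is_packing (natural_path r s) P) (fun P => #|P|) P hP).
Qed.

From mathcomp Require Import ring lra.
Import Order.TTheory GRing.Theory Num.Theory.
Local Open Scope ring_scope.
Lemma bern (x y : rat) k : 0 <= y -> y <= x ->
  x ^+ k.+1 - y ^+ k.+1 <= k.+1%:R * (x - y) * x ^+ k.
Proof.
move=> hy hyx; elim: k => [|k IH]; first by rewrite !expr1 expr0; lra.
have hY : y ^+ k.+1 <= x ^+ k.+1 by rewrite lerXn2r // ?nnegrE //; lra.
rewrite !exprS in IH hY *.
set a := x ^+ k in IH hY *; set Y := y ^+ k in IH hY *.
have h1 : x * (x * a - y * Y) <= x * ((k.+1)%:R * (x - y) * a).
  by rewrite ler_wpM2l //; lra.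
have h2 : (x - y) * (y * Y) <= (x - y) * (x * a).
  by rewrite ler_wpM2l //; lra.
rewrite -natr1 (mulrDl _ 1).
rewrite -[k.+1%:R]natr1 in h1.
nra.
Qed.

Lemma key (eps : rat) (r' m n q c B : nat) : 0 < eps -> (0 < m)%N ->
  (r'.+1 * c)%:R / eps < B%:R -> (B <= n)%N ->
  (m * (q - r'.+1) <= n)%N -> (n <= m * (q - r'.+1) + c)%N ->
  0 <= m%:R^-1 ^+ r'.+1 - eps ->
  (m%:R^-1 ^+ r'.+1 - eps) * (n ^_ r'.+1)%:R <= (q ^_ r'.+1)%:R.
Proof.
move=> he hm hB hBn h1 h2 ha.
set r := r'.+1 in ha h1 h2 hB *.
set al := _ - eps in ha *.
apply: le_trans (_ : al * (n ^ r)%:R <= _).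
  by rewrite ler_wpM2l // ler_nat ffact_ub.
apply: le_trans (_ : ((q - r) ^ r)%:R <= _); last by rewrite ler_nat ffact_lb.
set x := (n%:R : rat); set z := ((q - r)%N%:R : rat).
set y := (m%:R : rat) * z.
have hx : y <= x by rewrite /y /z /x -natrM ler_nat.
have hx2 : x <= y + c%:R by rewrite /y /z /x -natrM -natrD ler_nat.
have hy : 0 <= y by rewrite /y /z -natrM ler0n.
have hm' : (0 : rat) < m%:R by rewrite ltr0n.
set M := (m%:R : rat) ^+ r.
have hM : 0 < M by rewrite exprn_gt0.
have hM1 : 1 <= M by rewrite /M exprn_ege1 // ler1n.
have hyr : y ^+ r = M * z ^+ r by rewrite exprMn.
rewrite natrX natrX -/x -/z.
suff : M * (al * x ^+ r) <= M * z ^+ r by rewrite ler_pM2l.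
have -> : M * (al * x ^+ r) = (1 - eps * M) * x ^+ r.
  rewrite /al /M exprVn; field; rewrite expf_neq0 //; lra.
rewrite -hyr.
have hb := bern r' hy hx.
have hxB : (B%:R : rat) <= x by rewrite ler_nat.
have hc : (r%:R * c%:R : rat) <= eps * x.
  rewrite -natrM -ler_pdivrMl //.
  rewrite mulrC; apply: ltW; apply: lt_le_trans hxB.
  exact: hB.
have hx0 : 0 <= x by apply: le_trans hx.
have hxr : 0 <= x ^+ r' by apply: exprn_ge0.
have e1 : r%:R * (x - y) * x ^+ r' <= r%:R * c%:R * x ^+ r'.
  apply: ler_wpM2r => //; apply: ler_wpM2l; [by rewrite ler0n | lra].
have e2 : r%:R * c%:R * x ^+ r' <= eps * x * x ^+ r' by apply: ler_wpM2r.
have e3 : eps * x * x ^+ r' <= eps * M * x ^+ r.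
  rewrite /r exprS mulrA; apply: ler_wpM2r => //.
  have : 0 <= eps * x by apply: mulr_ge0 => //; lra.
  nra.
rewrite -/r in hb.
rewrite mulrBl mul1r.
lra.
Qed.

Theorem proposition3p1 (r s : nat) (hr : (0 < r)%N) (hs : (0 < s)%N)
  (hrs : (r %| s)%N) :
  forall eps : rat, 0 < eps ->
  exists N : nat, forall n : nat, (N <= n)%N ->
    ((r%:R / s%:R) ^+ r - eps) * ('C(n, r))%:R
      <= (nu n (natural_path r s))%:R :> rat.
Proof.
move=> eps he.
have hm : (0 < s %/ r)%N by rewrite divn_gt0 // dvdn_leq.
set m := (s %/ r)%N.
have hsm : s = (m * r)%N by rewrite divnK.
set c := (m + m * r)%N.
pose B := Num.bound ((r * c)%:R / eps).
have hB : (r * c)%:R / eps < B%:R.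
  by apply: archi_boundP; apply: divr_ge0; [rewrite ler0n | apply: ltW].
exists (maxn c.+1 B) => n hn.
have hBn : (B <= n)%N by move: hn; rewrite geq_max => /andP [].
have hcn : (c < n)%N by move: hn; rewrite geq_max => /andP [].
have hnu := @main_comb r s n hr hs hrs.
rewrite -/m in hnu.
set q := (n %/ m)%N in hnu *.
have hq1 : (q * m <= n)%N := leq_trunc_div n m.
have hq2 : (n < q * m + m)%N.
  by have := divn_eq n m; have := ltn_pmod n hm; rewrite -/q; lia.
have hqr : (r < q)%N.
  case: (ltnP r q) => // hqr.
  have : (q * m <= r * m)%N by rewrite leq_mul2r hqr orbT.
  lia.
have h1 : (m * (q - r) <= n)%N by rewrite mulnBr; lia.
have h2 : (n <= m * (q - r) + c)%N by rewrite mulnBr; lia.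
have -> : (r%:R / s%:R : rat) = m%:R^-1.
  rewrite {1}hsm natrM; field.
  rewrite !pnatr_eq0 -!lt0n hm hr //.
apply: le_trans (_ : _ <= ('C(q, r))%:R) _; last by rewrite ler_nat.
have [r' hr'] : exists r', r = r'.+1 by exists r.-1; lia.
subst r.
case: (lerP 0 ((m%:R : rat)^-1 ^+ r'.+1 - eps)) => ha.
  have hk := key he hm hB hBn h1 h2 ha.
  rewrite -!bin_ffact in hk.
  have hK : (0 : rat) < ((r'.+1)`!)%:R by rewrite ltr0n fact_gt0.
  move: hK hk; generalize ((r'.+1)`!) => K hK.
  by rewrite !natrM mulrA (ler_pM2r hK).
apply: le_trans (_ : _ <= 0) _ => //.
by rewrite mulr_le0_ge0 // ltW.
Qed.
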